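(* Let $n\ge 3$ and let $\alpha: I\to\mathbb{E}^n$ be an arclength parameterized curve with non-zero curvatures $\kappa_1,\dots,\kappa_{n-1}$. Then $\alpha$ is congruent to a rectifying curve if and only if, for some constant $c\in\mathbb{R}$, $$\kappa_{n-1}(s)\sum_{k=0}^{n-4}\mu_{n-3,k}(s)\frac{d^k}{ds^k}\left(\frac{\kappa_1(s)}{\kappa_2(s)}\right)+\sum_{k=0}^{n-3}\left(\mu_{n-2,k}(s)\frac{d^k}{ds^k}\left(\frac{\kappa_1(s)}{\kappa_2(s)}\right)\right)'=0,$$ where the functions $\mu_{i,k}$ are defined inductively by: $\mu_{1,0}(s)=s+c$; $\mu_{2,0}(s)=\frac{1}{\kappa_3(s)}$, $\mu_{2,1}(s)=\frac{s+c}{\kappa_3(s)}$; and for $i\in\{3,\dots,n-2\}$: $\mu_{i,0}=\frac{\kappa_i\mu_{i-2,0}+\mu_{i-1,0}'}{\kappa_{i+1}}$; $\mu_{i,k}=\frac{\kappa_i\mu_{i-2,k}+\mu_{i-1,k}'+\mu_{i-1,k-1}}{\kappa_{i+1}}$ for $k\in\{1,\dots,i-3\}$; $\mu_{i,i-2}=\frac{\mu_{i-1,i-3}+\mu_{i-1,i-2}'}{\kappa_{i+1}}$; $\mu_{i,i-1}=\frac{\mu_{i-1,i-2}}{\kappa_{i+1}}$. (Empty sums are zero.)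
   Context: For an arclength parameterized curve $\alpha$ in $\mathbb{E}^n$ that is $n$ times continuously differentiable, the Frenet frame $T,N,B_1,\dots,B_{n-2}$ is orthonormal and satisfies $T'=\kappa_1N$, $N'=-\kappa_1T+\kappa_2B_1$, $B_1'=-\kappa_2N+\kappa_3B_2$, $B_i'=-\kappa_{i+1}B_{i-1}+\kappa_{i+2}B_{i+1}$ for $i\in\{2,\dots,n-3\}$, $B_{n-2}'=-\kappa_{n-1}B_{n-3}$, where $\kappa_1,\dots,\kappa_{n-1}$ are the curvatures and $\kappa_1,\dots,\kappa_{n-2}>0$. ''Non-zero curvatures'' means no curvature is identically zero. A curve $\alpha$ is a rectifying curve if there is a fixed point $p$ such that for all $s$, $\langle\alpha(s)-p,N(s)\rangle=0$ (the orthogonal complement of $N(s)$ contains a fixed point). *)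

(* Defs.v *)
From Stdlib Require Import Reals Lra Lia Arith.
From Coquelicot Require Import Coquelicot.
Open Scope R_scope.

(* Points / vectors of E^n are represented as [nat -> R]; only the
   coordinates 0 .. n-1 are meaningful. *)
Definition vec := nat -> R.

Fixpoint sumk (m : nat) (f : nat -> R) : R :=
  match m with
  | O => 0
  | S m' => sumk m' f + f m'
  end.

Definition dot (n : nat) (u v : vec) : R := sumk n (fun i => u i * v i).

Definition in_I (a b : Rbar) (s : R) : Prop := Rbar_lt a s /\ Rbar_lt s b.

Definition smooth_on (a b : Rbar) (f : R -> R) : Prop :=
  forall (m : nat) (s : R), in_I a b s -> ex_derive_n f m s.

(* Frenet apparatus of an arclength parameterized curve alpha in E^n on I:
   E 0 = T, E 1 = N, E (j+1) = B_j (1 <= j <= n-2);  kap j = kappa_j (1<=j<=n-1).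
   - alpha' = T (so alpha is arclength parameterized since |T| = 1),
   - the frame is orthonormal,
   - the Frenet equations  E_j' = - kappa_j E_{j-1} + kappa_{j+1} E_{j+1}
     (the first term absent for j = 0, the second absent for j = n-1),
     which is exactly T' = k1 N, N' = -k1 T + k2 B1, B_i' = ..., B_{n-2}' = -k_{n-1} B_{n-3},
   - kappa_1, ..., kappa_{n-2} > 0. *)
Definition frenet_apparatus (n : nat) (a b : Rbar) (alpha : R -> vec)
  (E : nat -> R -> vec) (kap : nat -> R -> R) : Prop :=
  (forall s, in_I a b s -> forall i, (i < n)%nat ->
     is_derive (fun t => alpha t i) s (E 0%nat s i)) /\
  (forall s, in_I a b s -> forall j k, (j < n)%nat -> (k < n)%nat ->
     dot n (E j s) (E k s) = if Nat.eqb j k then 1 else 0) /\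
  (forall s, in_I a b s -> forall j i, (j < n)%nat -> (i < n)%nat ->
     is_derive (fun t => E j t i) s
       ((if Nat.eqb j 0 then 0 else - kap j s * E (j - 1)%nat s i) +
        (if Nat.ltb (j + 1) n then kap (j + 1)%nat s * E (j + 1)%nat s i else 0))) /\
  (forall s, in_I a b s -> forall j, (1 <= j <= n - 2)%nat -> 0 < kap j s).

Definition second_deriv (beta : R -> vec) (s : R) : vec :=
  fun i => Derive_n (fun t => beta t i) 2 s.

Definition principal_normal (n : nat) (beta : R -> vec) (s : R) : vec :=
  fun i => second_deriv beta s i / sqrt (dot n (second_deriv beta s) (second_deriv beta s)).

Definition rectifying (n : nat) (a b : Rbar) (beta : R -> vec) : Prop :=
  exists p : vec, forall s, in_I a b s ->
    dot n (fun i => beta s i - p i) (principal_normal n beta s) = 0.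

Definition orthogonal_mx (n : nat) (Q : nat -> nat -> R) : Prop :=
  forall i j, (i < n)%nat -> (j < n)%nat ->
    sumk n (fun k => Q k i * Q k j) = if Nat.eqb i j then 1 else 0.

Definition rigid_image (n : nat) (Q : nat -> nat -> R) (v : vec) (alpha : R -> vec)
  : R -> vec :=
  fun s i => sumk n (fun j => Q i j * alpha s j) + v i.

Definition congruent_to_rectifying (n : nat) (a b : Rbar) (alpha : R -> vec) : Prop :=
  exists (Q : nat -> nat -> R) (v : vec),
    orthogonal_mx n Q /\ rectifying n a b (rigid_image n Q v alpha).

(* The functions mu_{i,k}.  A family mu_i is a function k |-> (s |-> mu_{i,k}(s));
   values for k outside {0,...,i-1} are set to 0 (never used). *)
Definition mu1 (c : R) : nat -> R -> R :=
  fun k s => if Nat.eqb k 0 then s + c else 0.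

Definition mu2 (kap : nat -> R -> R) (c : R) : nat -> R -> R :=
  fun k s => if Nat.eqb k 0 then 1 / kap 3%nat s
             else if Nat.eqb k 1 then (s + c) / kap 3%nat s else 0.

(* mu_i from m2 = mu_{i-2} and m1 = mu_{i-1}, for i >= 3 *)
Definition mu_step (kap : nat -> R -> R) (i : nat) (m2 m1 : nat -> R -> R)
  : nat -> R -> R :=
  fun k s =>
    if Nat.eqb k 0 then
      (kap i s * m2 0%nat s + Derive (m1 0%nat) s) / kap (i + 1)%nat s
    else if Nat.leb k (i - 3) then
      (kap i s * m2 k s + Derive (m1 k) s + m1 (k - 1)%nat s) / kap (i + 1)%nat s
    else if Nat.eqb k (i - 2) then
      (m1 (i - 3)%nat s + Derive (m1 (i - 2)%nat) s) / kap (i + 1)%nat s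
    else if Nat.eqb k (i - 1) then
      m1 (i - 2)%nat s / kap (i + 1)%nat s
    else 0.

(* mu_aux j = (mu_{j+1}, mu_{j+2}) *)
Fixpoint mu_aux (kap : nat -> R -> R) (c : R) (j : nat)
  : (nat -> R -> R) * (nat -> R -> R) :=
  match j with
  | O => (mu1 c, mu2 kap c)
  | S j' => let (p, q) := mu_aux kap c j' in (q, mu_step kap (j' + 3) p q)
  end.

(* mu kap c i k s = mu_{i,k}(s)  (i >= 1; mu_0 := 0, only occurring in empty sums) *)
Definition mu (kap : nat -> R -> R) (c : R) (i : nat) : nat -> R -> R :=
  match i with
  | O => fun _ _ => 0
  | S i' => fst (mu_aux kap c i')
  end.

Definition rect_lhs (n : nat) (kap : nat -> R -> R) (c : R) (s : R) : R :=
  let r := fun t => kap 1%nat t / kap 2%nat t in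
  kap (n - 1)%nat s *
    sumk (n - 3) (fun k => mu kap c (n - 3) k s * Derive_n r k s)
  + sumk (n - 2) (fun k =>
      Derive (fun t => mu kap c (n - 2) k t * Derive_n r k t) s).

(* Main.v *)
Require Import Defs.
From Stdlib Require Import Reals Lra Lia Arith FunctionalExtensionality.
From Coquelicot Require Import Coquelicot.
Open Scope R_scope.

Lemma isd_plus (f g : R -> R) x df dg : is_derive f x df -> is_derive g x dg ->
  is_derive (fun t => f t + g t) x (df + dg).
Proof. intros H1 H2. exact (is_derive_plus f g x df dg H1 H2). Qed.

Lemma isd_mult (f g : R -> R) x df dg : is_derive f x df -> is_derive g x dg ->
  is_derive (fun t => f t * g t) x (df * g x + f x * dg).
Proof. intros H1 H2. exact (is_derive_mult f g x df dg H1 H2 Rmult_comm). Qed.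

Lemma isd_const (c x : R) : is_derive (fun _ => c) x 0.
Proof. exact (is_derive_const c x). Qed.

Lemma isd_id (x : R) : is_derive (fun t => t) x 1.
Proof. exact (is_derive_id x). Qed.

Lemma I_loc a b s : in_I a b s -> locally s (in_I a b).
Proof.
  intros H. apply (locally_open (in_I a b)); auto.
  apply open_and; [apply open_Rbar_gt | apply open_Rbar_lt].
Qed.

Lemma I_between a b x y t : in_I a b x -> in_I a b y -> x <= t <= y -> in_I a b t.
Proof.
  unfold in_I; intros [H1 H2] [H3 H4] [H5 H6]; split.
  - destruct a; simpl in *; auto; lra.
  - destruct b; simpl in *; auto; lra.
Qed.

Lemma I_nonempty a b : Rbar_lt a b -> exists s, in_I a b s.
Proof.
  unfold in_I; destruct a as [a| |], b as [b| |]; simpl; intros H; try tauto.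
  - exists ((a+b)/2); lra.
  - exists (a+1); lra.
  - exists (b-1); lra.
  - exists 0; auto.
Qed.

Lemma const_on_I a b (g : R -> R) :
  (forall s, in_I a b s -> is_derive g s 0) ->
  forall x y, in_I a b x -> in_I a b y -> g x = g y.
Proof.
  intros Hd x y Hx Hy.
  destruct (Rlt_or_le x y) as [Hlt|Hle].
  - apply (eq_is_derive g x y); auto. intros t Ht. apply Hd.
    apply (I_between a b x y); auto.
  - destruct (Rle_lt_or_eq_dec _ _ Hle) as [Hlt|Heq]; [|subst; auto].
    symmetry. apply (eq_is_derive g y x); auto. intros t Ht. apply Hd.
    apply (I_between a b y x); auto.
Qed.

Lemma sumk_ext m f g : (forall j, (j < m)%nat -> f j = g j) -> sumk m f = sumk m g.
Proof. induction m; simpl; intros H; auto. rewrite IHm; [rewrite H|]; auto. Qed.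

Lemma sumk_plus m f g : sumk m (fun j => f j + g j) = sumk m f + sumk m g.
Proof. induction m; simpl; [lra|]. rewrite IHm; lra. Qed.

Lemma sumk_scal m c f : sumk m (fun j => c * f j) = c * sumk m f.
Proof. induction m; simpl; [lra|]. rewrite IHm; lra. Qed.

Lemma sumk_opp m f : sumk m (fun j => - f j) = - sumk m f.
Proof. induction m; simpl; [lra|]. rewrite IHm; lra. Qed.

Lemma sumk_zero m : sumk m (fun _ => 0) = 0.
Proof. induction m; simpl; [lra|]. rewrite IHm; lra. Qed.

Lemma sumk_swap m k (g : nat -> nat -> R) :
  sumk m (fun i => sumk k (fun j => g i j)) = sumk k (fun j => sumk m (fun i => g i j)).
Proof.
  induction m; simpl.
  - now rewrite sumk_zero.
  - rewrite IHm, <- sumk_plus. reflexivity.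
Qed.

Lemma sumk_shift m f : sumk (S m) f = f 0%nat + sumk m (fun j => f (S j)).
Proof. induction m; simpl in *; [lra|]. rewrite IHm; lra. Qed.

Lemma sumk_delta m j g : (j < m)%nat ->
  sumk m (fun k => g k * (if Nat.eqb j k then 1 else 0)) = g j.
Proof.
  induction m; intros H; [lia|]. simpl.
  destruct (Nat.eq_dec j m) as [->|Hne].
  - rewrite Nat.eqb_refl. rewrite (sumk_ext _ _ (fun _ => 0)).
    + rewrite sumk_zero; ring.
    + intros k Hk. replace (Nat.eqb m k) with false; [ring|].
      symmetry; apply Nat.eqb_neq; lia.
  - rewrite IHm; [|lia]. replace (Nat.eqb j m) with false; [ring|].
    symmetry; apply Nat.eqb_neq; lia.
Qed.

Lemma sumk_delta' m j g : (j < m)%nat ->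
  sumk m (fun k => (if Nat.eqb k j then 1 else 0) * g k) = g j.
Proof.
  intros H. rewrite <- (sumk_delta m j g H). apply sumk_ext; intros k _.
  rewrite Nat.eqb_sym; ring.
Qed.

Lemma isd_sumk m (g : nat -> R -> R) dg s :
  (forall j, (j < m)%nat -> is_derive (g j) s (dg j)) ->
  is_derive (fun t => sumk m (fun j => g j t)) s (sumk m dg).
Proof.
  induction m; simpl; intros H.
  - apply isd_const.
  - apply isd_plus; auto.
Qed.

Lemma Derive_sumk m (g : nat -> R -> R) s :
  (forall j, (j < m)%nat -> ex_derive (g j) s) ->
  Derive (fun t => sumk m (fun j => g j t)) s = sumk m (fun j => Derive (g j) s).
Proof.
  intros H. apply is_derive_unique. apply isd_sumk.
  intros j Hj. apply Derive_correct; auto.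
Qed.

Lemma telescope m (c : nat -> R) :
  sumk (S m) (fun j => c j - (if Nat.eqb j 0 then 0 else c (j - 1)%nat)) = c m.
Proof.
  induction m.
  - simpl; ring.
  - change (sumk (S (S m)) ?f) with (sumk (S m) f + f (S m)).
    rewrite IHm. simpl. rewrite Nat.sub_0_r. ring.
Qed.

Lemma isd_dot n (dx dy : vec) (X Y : R -> vec) s :
  (forall i, (i < n)%nat -> is_derive (fun t => X t i) s (dx i)) ->
  (forall i, (i < n)%nat -> is_derive (fun t => Y t i) s (dy i)) ->
  is_derive (fun t => dot n (X t) (Y t)) s (dot n dx (Y s) + dot n (X s) dy).
Proof.
  intros HX HY. unfold dot. rewrite <- sumk_plus.
  apply (isd_sumk n (fun i t => X t i * Y t i)). intros j Hj.
  apply (isd_mult (fun t => X t j) (fun t => Y t j)); auto.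
Qed.


Definition Smk a b k (f : R -> R) :=
  forall s, in_I a b s -> forall j, (j <= k)%nat -> ex_derive_n f j s.
Definition Sm a b f := forall k, Smk a b k f.

Lemma Derive_n_S_fun (f : R -> R) j :
  Derive_n (Derive f) j = Derive_n f (S j).
Proof.
  apply functional_extensionality; intros x.
  rewrite <- Nat.add_1_r. rewrite <- (Derive_n_comp f j 1). reflexivity.
Qed.

Lemma Smk_S a b k f :
  Smk a b (S k) f <-> (forall s, in_I a b s -> ex_derive f s) /\ Smk a b k (Derive f).
Proof.
  split.
  - intros H; split.
    + intros s Hs. apply (H s Hs 1%nat); lia.
    + intros s Hs j Hj. destruct j; [simpl; auto|].
      change (ex_derive (Derive_n (Derive f) j) s).
      rewrite Derive_n_S_fun. apply (H s Hs (S (S j))); lia.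
  - intros [H1 H2] s Hs j Hj. destruct j; [simpl; auto|].
    destruct j; [simpl; auto|].
    change (ex_derive (Derive_n f (S j)) s).
    rewrite <- Derive_n_S_fun. apply (H2 s Hs (S j)); lia.
Qed.

Lemma Smk_ext a b k f g : (forall s, in_I a b s -> f s = g s) -> Smk a b k f -> Smk a b k g.
Proof.
  intros He H s Hs j Hj. apply (ex_derive_n_ext_loc f g).
  - apply (filter_imp (in_I a b)); auto. apply I_loc; auto.
  - apply H; auto.
Qed.

Lemma Sm_ext a b f g : (forall s, in_I a b s -> f s = g s) -> Sm a b f -> Sm a b g.
Proof. intros He H k. apply (Smk_ext a b k f g); auto. Qed.

Lemma Smk_0 a b f : Smk a b 0 f.
Proof. intros s Hs j Hj. replace j with 0%nat by lia. simpl; auto. Qed.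

Lemma Smk_const a b k c : Smk a b k (fun _ => c).
Proof.
  revert c; induction k; intros c; [apply Smk_0|].
  apply Smk_S; split.
  - intros; exact (ex_derive_const c s).
  - replace (Derive (fun _ => c)) with (fun _ : R => 0); auto.
    apply functional_extensionality; intros; rewrite Derive_const; auto.
Qed.

Lemma Smk_id a b k : Smk a b k (fun x => x).
Proof.
  destruct k; [apply Smk_0|].
  apply Smk_S; split.
  - intros; exact (ex_derive_id s).
  - replace (Derive (fun x => x)) with (fun _ : R => 1); [apply Smk_const|].
    apply functional_extensionality; intros; rewrite Derive_id; auto.
Qed.

Lemma Smk_plus a b k : forall f g, Smk a b k f -> Smk a b k g -> Smk a b k (fun x => f x + g x).
Proof.
  induction k; intros f g Hf Hg; [apply Smk_0|].
  apply Smk_S in Hf as [Hf1 Hf2]. apply Smk_S in Hg as [Hg1 Hg2].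
  apply Smk_S; split.
  - intros s Hs; exact (ex_derive_plus f g s (Hf1 s Hs) (Hg1 s Hs)).
  - apply (Smk_ext a b k (fun x => Derive f x + Derive g x)); auto.
    intros s Hs. rewrite Derive_plus; auto.
Qed.

Lemma Smk_le a b k j f : (j <= k)%nat -> Smk a b k f -> Smk a b j f.
Proof. intros Hl H s Hs i Hi. apply H; auto; lia. Qed.

Lemma Smk_mult a b k : forall f g, Smk a b k f -> Smk a b k g -> Smk a b k (fun x => f x * g x).
Proof.
  induction k; intros f g Hf Hg; [apply Smk_0|].
  assert (Hf' := Smk_le a b (S k) k f (le_S _ _ (le_n k)) Hf).
  assert (Hg' := Smk_le a b (S k) k g (le_S _ _ (le_n k)) Hg).
  apply Smk_S in Hf as [Hf1 Hf2]. apply Smk_S in Hg as [Hg1 Hg2].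
  apply Smk_S; split.
  - intros s Hs; apply ex_derive_mult; auto.
  - apply (Smk_ext a b k (fun x => Derive f x * g x + f x * Derive g x)).
    + intros s Hs. rewrite Derive_mult; auto.
    + apply Smk_plus; apply IHk; auto.
Qed.

Lemma Smk_inv a b k : forall f, Smk a b k f -> (forall s, in_I a b s -> f s <> 0) ->
  Smk a b k (fun x => / f x).
Proof.
  induction k; intros f Hf Hnz; [apply Smk_0|].
  assert (Hf' := Smk_le a b (S k) k f (le_S _ _ (le_n k)) Hf).
  apply Smk_S in Hf as [Hf1 Hf2].
  apply Smk_S; split.
  - intros s Hs; apply ex_derive_inv; auto.
  - apply (Smk_ext a b k (fun x => (-1 * Derive f x) * (/ f x * / f x))).
    + intros s Hs. rewrite Derive_inv; auto. field. auto.
    + apply Smk_mult; [apply Smk_mult; [apply Smk_const|auto]|].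
      apply Smk_mult; apply IHk; auto.
Qed.

Lemma Sm_const a b c : Sm a b (fun _ => c).
Proof. intros k; apply Smk_const. Qed.
Lemma Sm_id a b : Sm a b (fun x => x).
Proof. intros k; apply Smk_id. Qed.
Lemma Sm_plus a b f g : Sm a b f -> Sm a b g -> Sm a b (fun x => f x + g x).
Proof. intros Hf Hg k; apply Smk_plus; auto. Qed.
Lemma Sm_mult a b f g : Sm a b f -> Sm a b g -> Sm a b (fun x => f x * g x).
Proof. intros Hf Hg k; apply Smk_mult; auto. Qed.
Lemma Sm_inv a b f : Sm a b f -> (forall s, in_I a b s -> f s <> 0) -> Sm a b (fun x => / f x).
Proof. intros Hf Hg k; apply Smk_inv; auto. Qed.
Lemma Sm_div a b f g : Sm a b f -> Sm a b g -> (forall s, in_I a b s -> g s <> 0) ->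
  Sm a b (fun x => f x / g x).
Proof. intros Hf Hg Hnz. unfold Rdiv. apply Sm_mult; auto. apply Sm_inv; auto. Qed.
Lemma Sm_Derive a b f : Sm a b f -> Sm a b (Derive f).
Proof. intros H k. apply (Smk_S a b k f). auto. Qed.
Lemma Sm_ex_derive a b f s : Sm a b f -> in_I a b s -> ex_derive f s.
Proof. intros H Hs. apply (Smk_S a b 0 f); auto. Qed.
Lemma Sm_Derive_n a b f k : Sm a b f -> Sm a b (Derive_n f k).
Proof. intros H; induction k; simpl; auto. apply Sm_Derive; auto. Qed.
Lemma smooth_Sm a b f : smooth_on a b f -> Sm a b f.
Proof. intros H k s Hs j _. apply H; auto. Qed.
Lemma Sm_sumk a b m (g : nat -> R -> R) : (forall j, (j < m)%nat -> Sm a b (g j)) ->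
  Sm a b (fun x => sumk m (fun j => g j x)).
Proof.
  induction m; intros H; simpl. apply Sm_const.
  apply Sm_plus; auto.
Qed.


Lemma mu_1 kap c : mu kap c 1 = mu1 c.
Proof. reflexivity. Qed.
Lemma mu_2 kap c : mu kap c 2 = mu2 kap c.
Proof. reflexivity. Qed.
Lemma mu_SSS kap c j : mu kap c (S (S (S j))) =
  mu_step kap (S (S (S j))) (mu kap c (S j)) (mu kap c (S (S j))).
Proof.
  unfold mu. simpl. destruct (mu_aux kap c j) as [p q]. simpl.
  replace (j + 3)%nat with (S (S (S j))) by lia. reflexivity.
Qed.

Lemma mu_zero kap c i k s : (i <= k)%nat -> mu kap c i k s = 0.
Proof.
  intros H. destruct i as [|[|[|j]]].
  - reflexivity.
  - rewrite mu_1. unfold mu1. destruct k; [lia|reflexivity].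
  - rewrite mu_2. unfold mu2. destruct k as [|[|k]]; [lia|lia|reflexivity].
  - rewrite mu_SSS. unfold mu_step.
    replace (Nat.eqb k 0) with false by (symmetry; apply Nat.eqb_neq; lia).
    replace (Nat.leb k (S (S (S j)) - 3)) with false by (symmetry; apply Nat.leb_gt; lia).
    replace (Nat.eqb k (S (S (S j)) - 2)) with false by (symmetry; apply Nat.eqb_neq; lia).
    replace (Nat.eqb k (S (S (S j)) - 1)) with false by (symmetry; apply Nat.eqb_neq; lia).
    reflexivity.
Qed.

Lemma Derive_mu_zero kap c i k s : (i <= k)%nat -> Derive (mu kap c i k) s = 0.
Proof.
  intros H. replace (mu kap c i k) with (fun _ : R => 0).
  - apply Derive_const.
  - apply functional_extensionality; intros; rewrite mu_zero; auto.
Qed.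

Definition prevk (m : nat -> R -> R) (k : nat) (s : R) : R :=
  match k with O => 0 | S k' => m k' s end.

Lemma mu_rec kap c i k s : (2 <= i)%nat -> (k < i)%nat ->
  mu kap c i k s =
  (kap i s * mu kap c (i - 2)%nat k s + Derive (mu kap c (i - 1)%nat k) s
   + prevk (mu kap c (i - 1)%nat) k s) / kap (i + 1)%nat s.
Proof.
  intros H1 H2. destruct i as [|[|[|j]]]; try lia.
  - simpl. destruct k as [|[|k]]; try lia; simpl.
    + unfold mu2, mu1; simpl.
      replace (Derive (fun s0 : R => s0 + c) s) with 1.
      * unfold Rdiv. ring.
      * symmetry; apply is_derive_unique. replace 1 with (1 + 0) by ring. apply isd_plus; [apply isd_id|apply isd_const].
    + unfold mu2, mu1; simpl. rewrite Derive_const. unfold Rdiv. ring.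
  - rewrite mu_SSS. unfold mu_step. cbv beta.
    replace (S (S (S j)) - 3)%nat with j by lia.
    replace (S (S (S j)) - 2)%nat with (S j) by lia.
    replace (S (S (S j)) - 1)%nat with (S (S j)) by lia.
    destruct (Nat.eq_dec k 0) as [->|Hk0].
    + unfold prevk. rewrite Rplus_0_r. reflexivity.
    + replace (Nat.eqb k 0) with false by (symmetry; apply Nat.eqb_neq; lia).
      destruct (Nat.le_gt_cases k j) as [Hkj|Hkj].
      * replace (Nat.leb k j) with true by (symmetry; apply Nat.leb_le; lia).
        destruct k; [lia|]. unfold prevk. rewrite Nat.sub_succ, Nat.sub_0_r. reflexivity.
      * replace (Nat.leb k j) with false by (symmetry; apply Nat.leb_gt; lia).
        destruct (Nat.eq_dec k (S j)) as [->|Hk1].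
        -- rewrite Nat.eqb_refl. unfold prevk. rewrite (mu_zero kap c (S j) (S j)); auto. unfold Rdiv; ring.
        -- replace (Nat.eqb k (S j)) with false by (symmetry; apply Nat.eqb_neq; lia).
           replace k with (S (S j)) by lia. rewrite Nat.eqb_refl. unfold prevk.
           rewrite (mu_zero kap c (S j) (S (S j))); [|lia].
           rewrite Derive_mu_zero; auto. unfold Rdiv; ring.
Qed.


Definition rr (kap : nat -> R -> R) := fun t => kap 1%nat t / kap 2%nat t.
Definition FF kap c i s := sumk i (fun k => mu kap c i k s * Derive_n (rr kap) k s).


Lemma mu_smooth n a b kap c :
  (forall j, (1 <= j <= n - 1)%nat -> Sm a b (kap j)) ->
  (forall j, (1 <= j <= n - 1)%nat -> forall s, in_I a b s -> kap j s <> 0) ->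
  forall i, (1 <= i <= n - 2)%nat -> forall k, Sm a b (mu kap c i k).
Proof.
  intros HK Hnz.
  assert (forall m i, (i <= m)%nat -> (1 <= i <= n - 2)%nat -> forall k, Sm a b (mu kap c i k)).
  2:{ intros i Hi; apply (H i); auto. }
  induction m; intros i Him Hi k; [lia|].
  destruct (Nat.le_gt_cases i m) as [Hl|Hl]; [apply IHm; auto|].
  replace i with (S m) in * by lia. clear Hl Him.
  destruct m as [|[|j]].
  - rewrite mu_1. unfold mu1. destruct k; simpl.
    + apply Sm_plus; [apply Sm_id|apply Sm_const].
    + apply Sm_const.
  - rewrite mu_2. unfold mu2. destruct k as [|[|k]]; simpl.
    + apply Sm_div; [apply Sm_const|apply HK; lia|apply Hnz; lia].
    + apply Sm_div; [apply Sm_plus; [apply Sm_id|apply Sm_const]|apply HK; lia|apply Hnz; lia].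
    + apply Sm_const.
  - rewrite mu_SSS. unfold mu_step. cbv beta.
    assert (H1 : forall k, Sm a b (mu kap c (S j) k)) by (intros; apply IHm; lia).
    assert (H2 : forall k, Sm a b (mu kap c (S (S j)) k)) by (intros; apply IHm; lia).
    assert (HKi : Sm a b (kap (S (S (S j))))) by (apply HK; lia).
    assert (HKi1 : Sm a b (kap (S (S (S j)) + 1)%nat)) by (apply HK; lia).
    assert (HNi1 : forall s, in_I a b s -> kap (S (S (S j)) + 1)%nat s <> 0) by (apply Hnz; lia).
    destruct (Nat.eqb k 0); [|destruct (Nat.leb k (S (S (S j)) - 3));
       [|destruct (Nat.eqb k (S (S (S j)) - 2)); [|destruct (Nat.eqb k (S (S (S j)) - 1))]]].
    + apply Sm_div; auto. apply Sm_plus; [apply Sm_mult; auto|apply Sm_Derive; auto].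
    + apply Sm_div; auto. apply Sm_plus; [apply Sm_plus; [apply Sm_mult; auto|apply Sm_Derive; auto]|auto].
    + apply Sm_div; auto. apply Sm_plus; [auto|apply Sm_Derive; auto].
    + apply Sm_div; auto.
    + apply Sm_const.
Qed.

Lemma rr_smooth n a b kap :
  (3 <= n)%nat ->
  (forall j, (1 <= j <= n - 1)%nat -> Sm a b (kap j)) ->
  (forall j, (1 <= j <= n - 1)%nat -> forall s, in_I a b s -> kap j s <> 0) ->
  Sm a b (rr kap).
Proof.
  intros Hn HK Hnz. unfold rr. apply Sm_div; [apply HK; lia|apply HK; lia|apply Hnz; lia].
Qed.

Lemma FF_smooth n a b kap c :
  (3 <= n)%nat ->
  (forall j, (1 <= j <= n - 1)%nat -> Sm a b (kap j)) ->
  (forall j, (1 <= j <= n - 1)%nat -> forall s, in_I a b s -> kap j s <> 0) ->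
  forall i, (i <= n - 2)%nat -> Sm a b (FF kap c i).
Proof.
  intros Hn HK Hnz i Hi. unfold FF.
  apply (Sm_sumk a b i (fun k t => mu kap c i k t * Derive_n (rr kap) k t)).
  intros k Hk. apply Sm_mult.
  - apply (mu_smooth n); auto; lia.
  - apply Sm_Derive_n. apply (rr_smooth n); auto.
Qed.

Lemma Derive_FF n a b kap c :
  (3 <= n)%nat ->
  (forall j, (1 <= j <= n - 1)%nat -> Sm a b (kap j)) ->
  (forall j, (1 <= j <= n - 1)%nat -> forall s, in_I a b s -> kap j s <> 0) ->
  forall i s, (1 <= i <= n - 2)%nat -> in_I a b s ->
  Derive (FF kap c i) s = sumk i (fun k => Derive (mu kap c i k) s * Derive_n (rr kap) k s
                                 + mu kap c i k s * Derive_n (rr kap) (S k) s).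
Proof.
  intros Hn HK Hnz i s Hi Hs. unfold FF.
  rewrite (Derive_sumk i (fun k t => mu kap c i k t * Derive_n (rr kap) k t)).
  - apply sumk_ext; intros k Hk. rewrite Derive_mult; auto.
    + apply (Sm_ex_derive a b); auto. apply (mu_smooth n); auto.
    + apply (Sm_ex_derive a b); auto. apply Sm_Derive_n. apply (rr_smooth n); auto.
  - intros k Hk. apply ex_derive_mult.
    + apply (Sm_ex_derive a b); auto. apply (mu_smooth n); auto.
    + apply (Sm_ex_derive a b); auto. apply Sm_Derive_n. apply (rr_smooth n); auto.
Qed.

Lemma FF_0 kap c s : FF kap c 0 s = 0.
Proof. reflexivity. Qed.

Lemma FF_1 kap c s : FF kap c 1 s = (s + c) * (kap 1%nat s / kap 2%nat s).
Proof. unfold FF, rr. simpl. unfold mu1. simpl. ring. Qed.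

Lemma FF_rec n a b kap c :
  (3 <= n)%nat ->
  (forall j, (1 <= j <= n - 1)%nat -> Sm a b (kap j)) ->
  (forall j, (1 <= j <= n - 1)%nat -> forall s, in_I a b s -> kap j s <> 0) ->
  forall i s, (2 <= i <= n - 2)%nat -> in_I a b s ->
  FF kap c i s = (Derive (FF kap c (i - 1)) s + kap i s * FF kap c (i - 2) s) / kap (i + 1)%nat s.
Proof.
  intros Hn HK Hnz i s Hi Hs.
  assert (Hk1 : kap (i + 1)%nat s <> 0) by (apply Hnz; auto; lia).
  destruct i as [|[|m]]; try lia.
  replace (S (S m) - 1)%nat with (S m) by lia.
  replace (S (S m) - 2)%nat with m by lia.
  rewrite (Derive_FF n a b kap c Hn HK Hnz (S m) s); [|lia|auto].

  assert (E1 : kap (S (S m) + 1)%nat s * FF kap c (S (S m)) s =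
    kap (S (S m)) s * sumk (S (S m)) (fun k => mu kap c m k s * Derive_n (rr kap) k s)
    + sumk (S (S m)) (fun k => Derive (mu kap c (S m) k) s * Derive_n (rr kap) k s)
    + sumk (S (S m)) (fun k => prevk (mu kap c (S m)) k s * Derive_n (rr kap) k s)).
  { unfold FF. rewrite <- !sumk_scal, <- !sumk_plus. apply sumk_ext.
    intros k Hk. rewrite (mu_rec kap c (S (S m)) k s); [|lia|lia].
    replace (S (S m) - 2)%nat with m by lia. replace (S (S m) - 1)%nat with (S m) by lia.
    field. auto. }
  assert (EA : sumk (S (S m)) (fun k => mu kap c m k s * Derive_n (rr kap) k s) = FF kap c m s).
  { change (sumk (S (S m)) ?f) with (sumk m f + f m + f (S m)). cbv beta. rewrite (mu_zero kap c m m), (mu_zero kap c m (S m)); auto. unfold FF. ring. }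
  assert (EB : sumk (S (S m)) (fun k => Derive (mu kap c (S m) k) s * Derive_n (rr kap) k s) =
     sumk (S m) (fun k => Derive (mu kap c (S m) k) s * Derive_n (rr kap) k s)).
  { change (sumk (S (S m)) ?f) with (sumk (S m) f + f (S m)).
    cbv beta. rewrite Derive_mu_zero; auto. ring. }
  assert (EC : sumk (S (S m)) (fun k => prevk (mu kap c (S m)) k s * Derive_n (rr kap) k s) =
     sumk (S m) (fun k => mu kap c (S m) k s * Derive_n (rr kap) (S k) s)).
  { rewrite sumk_shift. simpl prevk. ring_simplify. reflexivity. }
  rewrite EA, EB, EC in E1. rewrite sumk_plus.
  apply (Rmult_eq_reg_l (kap (S (S m) + 1)%nat s)); auto.
  rewrite E1. field. auto.
Qed.

Lemma rect_lhs_eq n a b kap c :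
  (3 <= n)%nat ->
  (forall j, (1 <= j <= n - 1)%nat -> Sm a b (kap j)) ->
  (forall j, (1 <= j <= n - 1)%nat -> forall s, in_I a b s -> kap j s <> 0) ->
  forall s, in_I a b s ->
  rect_lhs n kap c s = kap (n - 1)%nat s * FF kap c (n - 3) s + Derive (FF kap c (n - 2)) s.
Proof.
  intros Hn HK Hnz s Hs. unfold rect_lhs, FF. cbv zeta.
  rewrite (Derive_sumk (n - 2) (fun k t => mu kap c (n - 2) k t * Derive_n (rr kap) k t)).
  - reflexivity.
  - intros k Hk. apply ex_derive_mult.
    + apply (Sm_ex_derive a b); auto. apply (mu_smooth n); auto; lia.
    + apply (Sm_ex_derive a b); auto. apply Sm_Derive_n. apply (rr_smooth n); auto.
Qed.


Lemma isd_eq (f : R -> R) x l l' : is_derive f x l -> l = l' -> is_derive f x l'.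
Proof. intros H ->; auto. Qed.

Lemma sumk_mult_r m f c : sumk m f * c = sumk m (fun j => f j * c).
Proof. induction m; simpl; [ring|]. rewrite <- IHm; ring. Qed.

Lemma sumk_mult m k f g : sumk m f * sumk k g = sumk m (fun j => sumk k (fun l => f j * g l)).
Proof.
  rewrite sumk_mult_r. apply sumk_ext; intros j _. rewrite <- sumk_scal. reflexivity.
Qed.

Definition Qap n (Q : nat -> nat -> R) (x : vec) : vec := fun i => sumk n (fun j => Q i j * x j).

Lemma dot_Q n Q x y : orthogonal_mx n Q -> dot n (Qap n Q x) (Qap n Q y) = dot n x y.
Proof.
  intros HQ. unfold dot, Qap.
  rewrite (sumk_ext n _ (fun i => sumk n (fun j => sumk n (fun l => x j * y l * (Q i j * Q i l))))).
  2:{ intros i _. rewrite sumk_mult. apply sumk_ext; intros j _. apply sumk_ext; intros l _. ring. }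
  rewrite sumk_swap.
  apply sumk_ext; intros j Hj. rewrite sumk_swap.
  rewrite (sumk_ext n _ (fun l => x j * y l * (if Nat.eqb j l then 1 else 0))).
  - rewrite (sumk_delta n j (fun l => x j * y l)); auto.
  - intros l Hl. rewrite sumk_scal. rewrite HQ; auto.
Qed.

Lemma dot_QT n Q w y :
  dot n w (Qap n Q y) = dot n (fun j => sumk n (fun i => Q i j * w i)) y.
Proof.
  unfold dot, Qap.
  rewrite (sumk_ext n _ (fun i => sumk n (fun j => Q i j * w i * y j))).
  2:{ intros i _. rewrite <- sumk_scal. apply sumk_ext; intros; cbv beta; ring. }
  rewrite sumk_swap. apply sumk_ext; intros j _. rewrite sumk_mult_r. reflexivity.
Qed.

Lemma dot_plus_l n x y z : dot n (fun i => x i + y i) z = dot n x z + dot n y z.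
Proof. unfold dot. rewrite <- sumk_plus. apply sumk_ext; intros; cbv beta; ring. Qed.
Lemma dot_plus_r n x y z : dot n z (fun i => x i + y i) = dot n z x + dot n z y.
Proof. unfold dot. rewrite <- sumk_plus. apply sumk_ext; intros; cbv beta; ring. Qed.
Lemma dot_scal_r n c x z : dot n z (fun i => c * x i) = c * dot n z x.
Proof. unfold dot. rewrite <- sumk_scal. apply sumk_ext; intros; cbv beta; ring. Qed.
Lemma dot_opp_l n x z : dot n (fun i => - x i) z = - dot n x z.
Proof. unfold dot. rewrite <- sumk_opp. apply sumk_ext; intros; cbv beta; ring. Qed.
Lemma dot_zero_r n z : dot n z (fun _ => 0) = 0.
Proof. unfold dot. rewrite (sumk_ext n _ (fun _ => 0)); [apply sumk_zero| intros; ring]. Qed.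
Lemma dot_ext n x y x' y' : (forall i, (i < n)%nat -> x i = x' i) ->
  (forall i, (i < n)%nat -> y i = y' i) -> dot n x y = dot n x' y'.
Proof. intros H1 H2. unfold dot. apply sumk_ext; intros. rewrite H1, H2; auto. Qed.
Lemma dot_sym n x y : dot n x y = dot n y x.
Proof. unfold dot. apply sumk_ext; intros; cbv beta; ring. Qed.

Lemma kap1_pos n a b alpha E kap : (3 <= n)%nat -> frenet_apparatus n a b alpha E kap ->
  forall s, in_I a b s -> 0 < kap 1%nat s.
Proof. intros Hn (_&_&_&H) s Hs. apply H; auto; lia. Qed.

Lemma frenet_E0 n a b alpha E kap : (3 <= n)%nat -> frenet_apparatus n a b alpha E kap ->
  forall s, in_I a b s -> forall i, (i < n)%nat ->
  is_derive (fun t => E 0%nat t i) s (kap 1%nat s * E 1%nat s i).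
Proof.
  intros Hn (_&_&H&_) s Hs i Hi. eapply isd_eq. apply H; auto; lia.
  simpl. replace (Nat.ltb 1 n) with true by (symmetry; apply Nat.ltb_lt; lia). ring.
Qed.

Lemma pn_rigid n a b alpha E kap Q v :
  (3 <= n)%nat -> frenet_apparatus n a b alpha E kap -> orthogonal_mx n Q ->
  forall s, in_I a b s -> forall i,
  principal_normal n (rigid_image n Q v alpha) s i = Qap n Q (E 1%nat s) i.
Proof.
  intros Hn HF HQ s Hs.
  assert (HF' := HF). destruct HF' as (Ha&Ho&_&_).
  assert (D1 : forall t, in_I a b t -> forall i,
    Derive (fun t => rigid_image n Q v alpha t i) t = Qap n Q (E 0%nat t) i).
  { intros t Ht i. apply is_derive_unique. unfold rigid_image, Qap.
    eapply isd_eq.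
    - apply (isd_plus _ (fun _ => v i)); [|apply isd_const].
      apply (isd_sumk n (fun j t => Q i j * alpha t j)). intros j Hj.
      apply is_derive_scal. apply Ha; auto.
    - apply Rplus_0_r. }
  assert (D2 : forall i, second_deriv (rigid_image n Q v alpha) s i = kap 1%nat s * Qap n Q (E 1%nat s) i).
  { intros i. unfold second_deriv. change (Derive_n ?f 2 s) with (Derive (Derive f) s).
    rewrite (Derive_ext_loc _ (fun t => Qap n Q (E 0%nat t) i)).
    - apply is_derive_unique. unfold Qap. eapply isd_eq.
      + apply (isd_sumk n (fun j t => Q i j * E 0%nat t j)). intros j Hj.
        apply is_derive_scal. apply (frenet_E0 n a b alpha E kap); auto.
      + rewrite <- sumk_scal. apply sumk_ext; intros; cbv beta; ring.
    - apply (filter_imp (in_I a b)); [|apply I_loc; auto]. intros t Ht. apply D1; auto. }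
  assert (Hk := kap1_pos n a b alpha E kap Hn HF s Hs).
  intros i. unfold principal_normal.
  replace (second_deriv (rigid_image n Q v alpha) s) with
    (fun i => kap 1%nat s * Qap n Q (E 1%nat s) i) by (apply functional_extensionality; intros; auto).
  cbv beta. rewrite dot_scal_r, dot_sym, dot_scal_r, dot_Q; auto.
  rewrite Ho; auto; try lia. rewrite Nat.eqb_refl.
  replace (kap 1%nat s * (kap 1%nat s * 1)) with (kap 1%nat s * kap 1%nat s) by ring.
  rewrite sqrt_square; [|lra]. field. lra.
Qed.

Lemma rigid_rect n a b alpha E kap Q v :
  (3 <= n)%nat -> frenet_apparatus n a b alpha E kap -> orthogonal_mx n Q ->
  (rectifying n a b (rigid_image n Q v alpha) <->
   exists q : vec, forall s, in_I a b s -> dot n (fun i => alpha s i - q i) (E 1%nat s) = 0).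
Proof.
  intros Hn HF HQ. unfold rectifying. split.
  - intros [p Hp]. exists (fun j => sumk n (fun i => Q i j * (p i - v i))).
    intros s Hs. rewrite <- (Hp s Hs). symmetry.
    rewrite (dot_ext n _ _ (fun i => Qap n Q (alpha s) i + (v i - p i)) (Qap n Q (E 1%nat s))).
    + rewrite dot_plus_l, dot_Q; auto. rewrite dot_QT.
      replace (fun i => alpha s i - sumk n (fun i0 => Q i0 i * (p i0 - v i0))) with
        (fun i => alpha s i + - sumk n (fun i0 => Q i0 i * (p i0 - v i0))) by
        (apply functional_extensionality; intros; ring).
      rewrite dot_plus_l, dot_opp_l.
      replace (fun j => sumk n (fun i => Q i j * (v i - p i))) with
        (fun j => - sumk n (fun i => Q i j * (p i - v i))); [rewrite dot_opp_l; reflexivity|].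
      apply functional_extensionality; intros j. rewrite <- sumk_opp. apply sumk_ext; intros; cbv beta; ring.
    + intros i Hi. unfold rigid_image, Qap. ring.
    + intros i Hi. apply (pn_rigid n a b alpha E kap); auto.
  - intros [q Hq]. exists (fun i => Qap n Q q i + v i). intros s Hs.
    rewrite (dot_ext n _ _ (Qap n Q (fun j => alpha s j - q j)) (Qap n Q (E 1%nat s))).
    + rewrite dot_Q; auto.
    + intros i Hi. unfold rigid_image, Qap. rewrite <- (Rplus_0_r (sumk n (fun j => Q i j * (alpha s j - q j)))).
      replace (sumk n (fun j => Q i j * (alpha s j - q j))) with
        (sumk n (fun j => Q i j * alpha s j) + - sumk n (fun j => Q i j * q j)).
      * ring.
      * rewrite <- sumk_opp, <- sumk_plus. apply sumk_ext; intros; cbv beta; ring.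
    + intros i Hi. apply (pn_rigid n a b alpha E kap); auto.
Qed.


Definition coef n (kap : nat -> R -> R) (f : nat -> R -> R) j s :=
  (if Nat.eqb j 0 then 1 else 0) + (if Nat.eqb j 0 then 0 else - kap j s * f (j - 1)%nat s)
  + (if Nat.ltb (j + 1) n then kap (j + 1)%nat s * f (j + 1)%nat s else 0).

Definition hseq n (alpha : R -> vec) (E : nat -> R -> vec) (q : vec) j t :=
  dot n (fun i => alpha t i - q i) (E j t).

Lemma isd_opp (f : R -> R) x l : is_derive f x l -> is_derive (fun t => - f t) x (- l).
Proof. intros H. exact (is_derive_opp f x l H). Qed.

Lemma h_deriv n a b alpha E kap q : (3 <= n)%nat -> frenet_apparatus n a b alpha E kap ->
  forall j, (j < n)%nat -> forall s, in_I a b s ->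
  is_derive (hseq n alpha E q j) s (coef n kap (hseq n alpha E q) j s).
Proof.
  intros Hn HF j Hj s Hs. destruct HF as (Ha&Ho&Hd&_). unfold hseq.
  eapply isd_eq.
  - apply (isd_dot n (E 0%nat s)
      (fun i => (if Nat.eqb j 0 then 0 else - kap j s * E (j - 1)%nat s i) +
        (if Nat.ltb (j + 1) n then kap (j + 1)%nat s * E (j + 1)%nat s i else 0))
      (fun t i => alpha t i - q i) (E j)).
    + intros i Hi. unfold Rminus. eapply isd_eq.
      * apply (isd_plus _ (fun _ => - q i)); [apply Ha; auto|apply isd_const].
      * apply Rplus_0_r.
    + intros i Hi. apply Hd; auto.
  - rewrite Ho; auto; try lia. rewrite dot_plus_r. unfold coef.
    destruct (Nat.ltb (j + 1) n).
    + rewrite dot_scal_r. destruct j; simpl.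
      * rewrite dot_zero_r. ring.
      * rewrite dot_scal_r. ring.
    + rewrite dot_zero_r. destruct j; simpl.
      * rewrite dot_zero_r. ring.
      * rewrite dot_scal_r. ring.
Qed.

Lemma alg_id n (kap : nat -> R -> R) (f : nat -> R -> R) (e : nat -> R) s : (1 <= n)%nat ->
  sumk n (fun j => coef n kap f j s * e j + f j s *
    ((if Nat.eqb j 0 then 0 else - kap j s * e (j - 1)%nat) +
     (if Nat.ltb (j + 1) n then kap (j + 1)%nat s * e (j + 1)%nat else 0))) = e 0%nat.
Proof.
  intros Hn.
  set (cc := fun j => if Nat.ltb (j + 1) n then kap (j + 1)%nat s * (f (j + 1)%nat s * e j + f j s * e (j + 1)%nat) else 0).
  rewrite (sumk_ext n _ (fun j => (if Nat.eqb j 0 then 1 else 0) * e j +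
      (cc j - (if Nat.eqb j 0 then 0 else cc (j - 1)%nat)))).
  - rewrite sumk_plus. rewrite (sumk_delta' n 0 e); [|lia].
    destruct n as [|m]; [lia|]. rewrite telescope. unfold cc.
    replace (Nat.ltb (m + 1) (S m)) with false by (symmetry; apply Nat.ltb_ge; lia). ring.
  - intros j Hj. unfold coef, cc. destruct j as [|j].
    + simpl. destruct (Nat.ltb 1 n); ring.
    + simpl Nat.eqb. cbv iota. rewrite Nat.sub_succ, Nat.sub_0_r.
      replace (Nat.ltb (j + 1) n) with true by (symmetry; apply Nat.ltb_lt; lia).
      replace (j + 1)%nat with (S j) by lia.
      destruct (Nat.ltb (S j + 1) n); ring.
Qed.


Ltac toR := match goal with |- ?x = ?y => change (@eq R x y) end.

Definition fseq kap c (j : nat) (t : R) : R :=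
  match j with O => t + c | S j' => FF kap c j' t end.

Theorem theorem4p1 (n : nat) (a b : Rbar) (alpha : R -> vec)
  (E : nat -> R -> vec) (kap : nat -> R -> R) :
  (3 <= n)%nat ->
  Rbar_lt a b ->
  (forall i, (i < n)%nat -> smooth_on a b (fun t => alpha t i)) ->
  frenet_apparatus n a b alpha E kap ->
  (forall j, (1 <= j <= n - 1)%nat -> smooth_on a b (kap j)) ->
  (forall s, in_I a b s -> kap (n - 1)%nat s <> 0) ->
  (congruent_to_rectifying n a b alpha <->
   exists c : R, forall s, in_I a b s -> rect_lhs n kap c s = 0).
Proof.
  intros Hn Hab Halpha HF HK0 Hlast.
  assert (HK : forall j, (1 <= j <= n - 1)%nat -> Sm a b (kap j)).
  { intros j Hj. apply smooth_Sm. auto. }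
  assert (Hnz : forall j, (1 <= j <= n - 1)%nat -> forall s, in_I a b s -> kap j s <> 0).
  { intros j Hj s Hs. destruct (Nat.eq_dec j (n - 1)) as [->|Hne]; auto.
    destruct HF as (_&_&_&Hp). assert (0 < kap j s) by (apply Hp; auto; lia). lra. }
  destruct (I_nonempty a b Hab) as [s0 Hs0].
  split.
  - intros (Q & v & HQ & Hr).
    apply (rigid_rect n a b alpha E kap Q v Hn HF HQ) in Hr as [q Hq].
    set (h := hseq n alpha E q).
    assert (Hh : forall j, (j < n)%nat -> forall s, in_I a b s -> is_derive (h j) s (coef n kap h j s)).
    { intros j Hj s Hs. apply (h_deriv n a b alpha E kap q); auto. }
    assert (H1 : forall s, in_I a b s -> h 1%nat s = 0) by (intros; apply Hq; auto).
    assert (Hc1 : forall s, in_I a b s -> coef n kap h 1 s = 0).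
    { intros s Hs. rewrite <- (is_derive_unique _ _ _ (Hh 1%nat ltac:(lia) s Hs)).
      rewrite (Derive_ext_loc _ (fun _ => 0)); [apply Derive_const|].
      apply (filter_imp (in_I a b)); [|apply I_loc; auto]. intros; apply H1; auto. }
    set (c := h 0%nat s0 - s0).
    assert (H0 : forall s, in_I a b s -> h 0%nat s = s + c).
    { intros s Hs.
      assert (Hcst := const_on_I a b (fun t => h 0%nat t + -1 * t)).
      assert (E0 : h 0%nat s + -1 * s = h 0%nat s0 + -1 * s0).
      { apply Hcst; auto. intros t Ht. eapply isd_eq.
        - apply isd_plus; [apply Hh; [lia|auto]|apply is_derive_scal; apply isd_id].
        - unfold coef. simpl. replace (Nat.ltb 1 n) with true by (symmetry; apply Nat.ltb_lt; lia).
          rewrite H1; auto. ring. }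
      unfold c. lra. }
    assert (HP : forall m i, (i <= m)%nat -> (i <= n - 2)%nat -> forall s, in_I a b s ->
              h (S i) s = FF kap c i s).
    { induction m; intros i Him Hi s Hs.
      - replace i with 0%nat by lia. rewrite FF_0. apply H1; auto.
      - destruct (Nat.le_gt_cases i m) as [Hl|Hl]; [apply IHm; auto|].
        replace i with (S m) in * by lia. clear Hl Him.
        destruct m as [|m'].
        + assert (Hk2 : kap 2%nat s <> 0) by (apply Hnz; auto; lia).
          assert (X := Hc1 s Hs). unfold coef in X. simpl in X.
          replace (Nat.ltb 2 n) with true in X by (symmetry; apply Nat.ltb_lt; lia).
          rewrite H0 in X; auto. rewrite FF_1. field_simplify; auto.
          apply (Rmult_eq_reg_l (kap 2%nat s)); auto. field_simplify; auto. lra.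
        + assert (X := is_derive_unique _ _ _ (Hh (S (S m')) ltac:(lia) s Hs)).
          unfold coef in X. simpl Nat.eqb in X. cbv iota in X.
          replace (Nat.ltb (S (S m') + 1) n) with true in X by (symmetry; apply Nat.ltb_lt; lia).
          rewrite (Derive_ext_loc _ (FF kap c (S m'))) in X.
          2:{ apply (filter_imp (in_I a b)); [|apply I_loc; auto]. intros; apply IHm; auto; lia. }
          replace (S (S m') - 1)%nat with (S m') in X by lia.
          rewrite (IHm m') in X; auto; try lia.
          rewrite (FF_rec n a b kap c Hn HK Hnz (S (S m')) s); [|lia|auto].
          replace (S (S m') - 1)%nat with (S m') by lia.
          replace (S (S m') - 2)%nat with m' by lia.
          rewrite X. replace (S (S (S m'))) with (S (S m') + 1)%nat by lia. field.
          apply Hnz; auto; lia. }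
    exists c. intros s Hs. rewrite (rect_lhs_eq n a b kap c Hn HK Hnz s Hs).
    assert (X := is_derive_unique _ _ _ (Hh (n - 1)%nat ltac:(lia) s Hs)).
    unfold coef in X.
    replace (Nat.eqb (n - 1) 0) with false in X by (symmetry; apply Nat.eqb_neq; lia).
    replace (Nat.ltb (n - 1 + 1) n) with false in X by (symmetry; apply Nat.ltb_ge; lia).
    rewrite (Derive_ext_loc _ (FF kap c (n - 2))) in X.
    2:{ apply (filter_imp (in_I a b)); [|apply I_loc; auto]. intros t Ht.
        replace (n - 1)%nat with (S (n - 2)) by lia. apply (HP (n - 2)%nat); auto. }
    rewrite X. replace (n - 1 - 1)%nat with (S (n - 3)) by lia.
    rewrite (HP (n - 3)%nat); auto; try lia. ring.
  - intros [c Hc].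
    assert (HQ : orthogonal_mx n (fun i j => if Nat.eqb i j then 1 else 0)).
    { intros i j Hi Hj.
      apply (sumk_delta' n i (fun k => if Nat.eqb k j then 1 else 0)); auto. }
    exists (fun i j => if Nat.eqb i j then 1 else 0), (fun _ => 0). split; auto.
    apply (rigid_rect n a b alpha E kap _ _ Hn HF HQ).
    set (f := fseq kap c).
    assert (Hf : forall j, (j < n)%nat -> forall s, in_I a b s -> is_derive (f j) s (coef n kap f j s)).
    { intros j Hj s Hs. unfold coef. destruct j as [|[|j']].
      - simpl. replace (Nat.ltb 1 n) with true by (symmetry; apply Nat.ltb_lt; lia).
        eapply isd_eq; [apply (isd_plus (fun t => t) (fun _ => c)); [apply isd_id|apply isd_const]|].
        unfold f, fseq. rewrite FF_0. match goal with |- ?x = ?y => change (@eq R x y) end; ring.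
      - simpl. replace (Nat.ltb 2 n) with true by (symmetry; apply Nat.ltb_lt; lia).
        assert (Hk2 : kap 2%nat s <> 0) by (apply Hnz; auto; lia).
        eapply isd_eq; [apply (isd_const 0)|].
        unfold f, fseq. rewrite FF_1. toR. field. auto.
      - simpl Nat.eqb. cbv iota.
        replace (S (S j') - 1)%nat with (S j') by lia.
        unfold f, fseq.
        eapply isd_eq; [apply Derive_correct; apply (Sm_ex_derive a b); auto;
                        apply (FF_smooth n); auto; lia|].
        destruct (Nat.lt_ge_cases (S (S j') + 1) n) as [Hl|Hl].
        + replace (Nat.ltb (S (S j') + 1) n) with true by (symmetry; apply Nat.ltb_lt; lia).
          replace (S (S j') + 1)%nat with (S (S (S j'))) by lia.
          rewrite (FF_rec n a b kap c Hn HK Hnz (S (S j')) s); [|lia|auto].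
          replace (S (S j') - 1)%nat with (S j') by lia.
          replace (S (S j') - 2)%nat with j' by lia.
          replace (S (S j') + 1)%nat with (S (S (S j'))) by lia.
          change (fun t : R => FF kap c (S j') t) with (FF kap c (S j')). toR. field. apply Hnz; auto; lia.
        + replace (Nat.ltb (S (S j') + 1) n) with false by (symmetry; apply Nat.ltb_ge; lia).
          assert (Y := Hc s Hs). rewrite (rect_lhs_eq n a b kap c Hn HK Hnz s Hs) in Y.
          replace (n - 1)%nat with (S (S j')) in Y by lia.
          replace (n - 3)%nat with j' in Y by lia.
          replace (n - 2)%nat with (S j') in Y by lia.
          change (fun t : R => FF kap c (S j') t) with (FF kap c (S j')). toR. lra. }
    set (P := fun i t => alpha t i - sumk n (fun j => f j t * E j t i)).
    assert (HP : forall i, (i < n)%nat -> forall s, in_I a b s -> is_derive (P i) s 0).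
    { intros i Hi s Hs. destruct HF as (Ha&Ho&Hd&_). unfold P, Rminus.
      eapply isd_eq.
      - apply isd_plus; [apply Ha; auto|]. apply isd_opp.
        apply (isd_sumk n (fun j t => f j t * E j t i)). intros j Hj.
        apply (isd_mult (f j) (fun t => E j t i)); [apply Hf; auto|apply Hd; auto].
      - cbv beta. rewrite (alg_id n kap f (fun j => E j s i) s); [toR; ring|lia]. }
    exists (fun i => P i s0). intros s Hs.
    rewrite (dot_ext n _ _ (fun i => sumk n (fun j => f j s * E j s i)) (E 1%nat s)); auto.
    2:{ intros i Hi. rewrite <- (const_on_I a b (P i) (HP i Hi) s s0 Hs Hs0). unfold P. ring. }
    unfold dot. rewrite (sumk_ext n _ (fun i => sumk n (fun j => f j s * (E j s i * E 1%nat s i)))).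
    2:{ intros i Hi. rewrite sumk_mult_r. apply sumk_ext; intros; ring. }
    rewrite sumk_swap.
    rewrite (sumk_ext n _ (fun j => f j s * (if Nat.eqb 1 j then 1 else 0))).
    + rewrite (sumk_delta n 1 (fun j => f j s)); [|lia]. reflexivity.
    + intros j Hj. rewrite sumk_scal. destruct HF as (_&Ho&_). unfold dot in Ho. rewrite (Ho s Hs j 1%nat); [|lia|lia]. rewrite Nat.eqb_sym. reflexivity.
Qed.
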